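(* Let $k$ be a field and $S=k[x_1,\dots,x_n]$. (1) Let $I\subseteq K\subseteq S$ and $J\subseteq L\subseteq S$ be monomial ideals with $\dim_k S/I<\infty$, $\dim_k S/J<\infty$, and let $\phi\colon K/I\to L/J$ be an $S$-module isomorphism sending monomials to monomials. Let $\lambda$ (resp. $\mu$) be the $n$-dimensional Young diagram corresponding to $I$ (resp. $J$). Then there exist connected abstract skew shapes $\nu_1,\dots,\nu_r$ and lattice points $b_1,\dots,b_r,c_1,\dots,c_r\in\mathbb{Z}^n$ such that $\nu_1+b_1,\dots,\nu_r+b_r$ are exactly the connected components of the skew shape associated with $K/I$, $\nu_1+c_1,\dots,\nu_r+c_r$ are exactly the connected components of the skew shape associated with $L/J$, $\phi(x^{v+b_i})=x^{v+c_i}$ for all $i$ and $v\in\nu_i$, and the following hold: (a) $\nu_1+b_1,\dots,\nu_r+b_r$ are pairwise disjoint and contained in $\lambda$; (b) for all $w\in\mathbb{N}^n$ and all $v_i\in\nu_i$ with $v_i+b_i+w\in\lambda$, we have $v_i+w\in\nu_i$; (c) $\nu_1+c_1,\dots,\nu_r+c_r$ are pairwise disjoint and contained in $\mu$; (d) for all $w\in\mathbb{N}^n$ and all $v_i\in\nu_i$ with $v_i+c_i+w\in\mu$, we have $v_i+w\in\nu_i$. (2) Conversely, given $n$-dimensional Young diagrams $\lambda,\mu$, connected abstract skew shapes $\nu_1,\dots,\nu_r$ and lattice points $b_1,\dots,b_r,c_1,\dots,c_r\in\mathbb{Z}^n$ satisfying (a)–(d), there exist monomial ideals $I\subseteq K$,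 $J\subseteq L$ of $S$ with $\dim_k S/I,\dim_k S/J<\infty$ and an $S$-module isomorphism $\phi\colon K/I\to L/J$ sending monomials to monomials, such that $\lambda$ (resp. $\mu$) is the Young diagram corresponding to $I$ (resp. $J$), the connected components of the skew shape of $K/I$ (resp. $L/J$) are the $\nu_i+b_i$ (resp. $\nu_i+c_i$), and $\phi(x^{v+b_i})=x^{v+c_i}$ for all $i$ and $v\in\nu_i$.
   Context: Monomials $x^a=x_1^{a_1}\cdots x_n^{a_n}$ are identified with $a\in\mathbb{N}^n$, which carries the componentwise partial order. An $n$-dimensional Young diagram is a finite subset $\lambda\subseteq\mathbb{N}^n$ such that $w\in\lambda$ and $v\le w$ imply $v\in\lambda$; the Young diagram corresponding to a monomial ideal $I$ with $\dim_k S/I<\infty$ is $\{a\in\mathbb{N}^n : x^a\notin I\}$. The skew shape associated with $K/I$ (for monomial ideals $I\subseteq K$) is $\{a : x^a\in K,\ x^a\notin I\}$; a skew shape is a difference $\lambda\setminus\lambda'$ of two Young diagrams. A set $\epsilon$ is connected if for any $a,b\in\epsilon$ there exist $a',b'\in\mathbb{N}^n$ with $a+a'=b+b'\in\epsilon$; every skew shape decomposes uniquely as a disjoint union of connected ones (its connected components). Each skew shape $\nu$ has a unique lexicographically smallest point $\ell_\nu$; an abstract skew shape is a set of the form $\nu-\ell_\nu\subseteq\mathbb{Z}^n$ for a skew shape $\nu$, and it is connected if $\nu$ is. An isomorphism $\phi\colon K/I\to L/J$ sends monomials to monomials if it maps the class of each monomial of $K$ not in $I$ to the class of a monomial of $L$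 not in $J$. *)

(* Defs.v *)
From HB Require Import structures.
From mathcomp Require Import all_boot all_order all_algebra.
From mathcomp Require Import mpoly.
From Stdlib Require Import Relations.
Set Implicit Arguments. Unset Strict Implicit. Unset Printing Implicit Defensive.
Import Order.TTheory GRing.Theory Num.Theory.
Local Open Scope ring_scope.

Definition zpt (n : nat) := {ffun 'I_n -> int}.
Definition zset (n : nat) := zpt n -> Prop.

Definition zseteq n (A B : zset n) := forall x, A x <-> B x.

Definition mz n (m : 'X_{1..n}) : zpt n := [ffun i => (m i)%:Z].

Definition nonneg n (a : zpt n) := forall i, 0 <= a i.
Definition zle n (a b : zpt n) := forall i, a i <= b i.
Definition lexle n (a b : zpt n) :=
  a = b \/ exists i : 'I_n, a i < b i /\ forall j : 'I_n, (j < i)%N -> a j = b j.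

Definition shift n (A : zset n) (b : zpt n) : zset n := fun x => A (x - b).

Definition zfinite n (A : zset n) := exists s : seq (zpt n), forall x, A x -> x \in s.

Definition young n (lam : zset n) :=
  [/\ zfinite lam, (forall w, lam w -> nonneg w) &
      (forall v w, nonneg v -> zle v w -> lam w -> lam v)].

Definition skew n (eps : zset n) :=
  exists lam lam' : zset n, [/\ young lam, young lam' &
    zseteq eps (fun x => lam x /\ ~ lam' x)].

Definition linked n (eps : zset n) (a b : zpt n) :=
  [/\ eps a, eps b & exists a' b', [/\ nonneg a', nonneg b',
        a + a' = b + b' & eps (a + a')]].

Definition connected n (eps : zset n) :=
  forall a b, eps a -> eps b -> clos_refl_trans (zpt n) (linked eps) a b.

Definition component n (eps C : zset n) :=
  exists a, eps a /\
    zseteq C (fun b => eps b /\ clos_refl_trans (zpt n) (linked eps) a b).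

Definition conn_abs_skew n (nu : zset n) :=
  exists (mu : zset n) (l : zpt n),
    [/\ skew mu, connected mu, mu l, (forall v, mu v -> lexle l v) &
        zseteq nu (shift mu (- l))].

Definition components_are n (eps : zset n) r (nu : 'I_r -> zset n) (b : 'I_r -> zpt n) :=
  (forall i, component eps (shift (nu i) (b i))) /\
  (forall C, component eps C -> exists i, zseteq C (shift (nu i) (b i))).

Definition cond_disj_in n (lam : zset n) r (nu : 'I_r -> zset n) (b : 'I_r -> zpt n) :=
  (forall i j, i != j -> forall x, ~ (shift (nu i) (b i) x /\ shift (nu j) (b j) x)) /\
  (forall i x, shift (nu i) (b i) x -> lam x).

Definition cond_closed n (lam : zset n) r (nu : 'I_r -> zset n) (b : 'I_r -> zpt n) :=
  forall i w v, nonneg w -> nu i v -> lam (v + b i + w) -> nu i (v + w).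

Section Poly.
Variables (k : fieldType) (n : nat).
Local Notation S := {mpoly k[n]}.
Definition pset := S -> Prop.

Definition ideal (I : pset) :=
  [/\ I 0, (forall f g, I f -> I g -> I (f + g)) & (forall s f, I f -> I (s * f))].

Definition monomial_ideal (I : pset) :=
  ideal I /\ forall f, I f -> exists ps : seq (S * 'X_{1..n}),
    (forall p, p \in ps -> I 'X_[p.2]) /\ f = \sum_(p <- ps) p.1 * 'X_[p.2].

Definition psubset (I K : pset) := forall f, I f -> K f.

Definition fin_codim (I : pset) :=
  exists B : seq S, forall f, exists c : seq k,
    I (f - \sum_(i < size B) c`_i *: B`_i).

Definition young_of (I : pset) : zset n :=
  fun a => exists m : 'X_{1..n}, mz m = a /\ ~ I 'X_[m].
Definition skew_of (K I : pset) : zset n :=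
  fun a => exists m : 'X_{1..n}, [/\ mz m = a, K 'X_[m] & ~ I 'X_[m]].

(* An S-module homomorphism K/I -> L/J, represented by a lift phi : S -> S
   (only its values on K matter); it is an isomorphism when bijective on classes. *)
Definition quot_iso (K I L J : pset) (phi : S -> S) :=
  [/\ (forall f, K f -> L (phi f)),
      (forall f g, K f -> K g -> J (phi (f + g) - (phi f + phi g))) /\
      (forall s f, K f -> J (phi (s * f) - s * phi f)),
      (forall f, I f -> J (phi f)),
      (forall f, K f -> J (phi f) -> I f) &
      (forall g, L g -> exists f, K f /\ J (phi f - g))].

Definition sends_monomials (K I L J : pset) (phi : S -> S) :=
  forall m : 'X_{1..n}, K 'X_[m] -> ~ I 'X_[m] ->
    exists m' : 'X_{1..n}, [/\ L 'X_[m'], ~ J 'X_[m'] & J (phi 'X_[m] - 'X_[m'])].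

Definition phi_matches (J : pset) (phi : S -> S) r (nu : 'I_r -> zset n)
    (b c : 'I_r -> zpt n) :=
  forall i v (m m' : 'X_{1..n}), nu i v -> mz m = v + b i -> mz m' = v + c i ->
    J (phi 'X_[m] - 'X_[m']).
End Poly.

(* Main.v *)
Require Import Defs.
From HB Require Import structures.
From mathcomp Require Import all_boot all_order all_algebra.
From mathcomp Require Import mpoly.
From mathcomp Require Import ring zify.
From Stdlib Require Import Relations Classical ClassicalEpsilon.
Set Implicit Arguments. Unset Strict Implicit. Unset Printing Implicit Defensive.
Import Order.TTheory GRing.Theory Num.Theory.
Local Open Scope ring_scope.



Lemma sum_ne0 (R : nmodType) (T : eqType) (s : seq T) (F : T -> R) :
  \sum_(t <- s) F t != 0 -> exists t, t \in s /\ F t != 0.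
Proof.
elim: s => [|x s IH]; first by rewrite big_nil eqxx.
rewrite big_cons => H.
case: (eqVneq (F x) 0) => Hx.
  move: H; rewrite Hx add0r => /IH [t [ts Ft]].
  by exists t; rewrite inE ts orbT.
by exists x; rewrite inE eqxx.
Qed.

Lemma sum_pick (R : nmodType) (T : eqType) (s : seq T) (F : T -> R) t0 :
  uniq s -> t0 \in s -> (forall t, t \in s -> t != t0 -> F t = 0) ->
  \sum_(t <- s) F t = F t0.
Proof.
move=> us ts H; rewrite (bigD1_seq t0) //= big1_seq ?addr0 //.
by move=> t /andP [tn ts']; apply: H.
Qed.

Lemma sum_zero (R : nmodType) (T : eqType) (s : seq T) (F : T -> R) :
  (forall t, t \in s -> F t = 0) -> \sum_(t <- s) F t = 0.
Proof.
elim: s => [|x s IH] H; first by rewrite big_nil.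
rewrite big_cons H ?inE ?eqxx // add0r IH // => t ts; apply: H; by rewrite inE ts orbT.
Qed.

Section Base.
Variable n : nat.
Implicit Types (m w u : 'X_{1..n}) (x y a : zpt n).

Definition tomon (x : zpt n) : 'X_{1..n} := [multinom `|x i|%N | i < n].

Lemma mzE m i : mz m i = (m i)%:Z. Proof. by rewrite ffunE. Qed.
Lemma mz_nonneg m : nonneg (mz m). Proof. by move=> i; rewrite mzE. Qed.
Lemma tomonK x : nonneg x -> mz (tomon x) = x.
Proof. move=> H; apply/ffunP => i. rewrite /mz ffunE mnmE gez0_abs //. Qed.
Lemma mzK m : tomon (mz m) = m.
Proof. by apply/mnmP => i; rewrite mnmE mzE. Qed.
Lemma mz_inj : injective (@mz n).
Proof. by move=> m1 m2 H; rewrite -(mzK m1) H mzK. Qed.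
Lemma mzD m1 m2 : mz (m1 + m2)%MM = mz m1 + mz m2.
Proof. by apply/ffunP => i; rewrite !ffunE mnmDE. Qed.
Lemma nonneg_mz x : nonneg x -> exists m, mz m = x.
Proof. by move=> H; exists (tomon x); rewrite tomonK. Qed.
Lemma nonnegD x y : nonneg x -> nonneg y -> nonneg (x + y).
Proof. by move=> Hx Hy i; rewrite ffunE addr_ge0. Qed.
Lemma zle_mz m1 m2 : zle (mz m1) (mz m2) <-> (m1 <= m2)%MM.
Proof.
split => [H|/mnm_lepP H i]; last by rewrite !mzE lez_nat.
by apply/mnm_lepP => i; have := H i; rewrite !mzE lez_nat.
Qed.
Lemma zleD x y : nonneg y -> zle x (x + y).
Proof. by move=> H i; rewrite ffunE lerDl. Qed.
Lemma zle_nonneg x y : zle x y -> nonneg (y - x).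
Proof. by move=> H i; rewrite ffunE ffunE subr_ge0. Qed.

End Base.

Section MI.
Variables (k : fieldType) (n : nat).
Local Notation S := {mpoly k[n]}.
Implicit Types (I J : pset k n) (f g : S) (m w u : 'X_{1..n}).

Lemma coef_sumX (T : Type) (s : seq T) (a : T -> k) (g : T -> 'X_{1..n}) u :
  (\sum_(t <- s) a t *: 'X_[g t] : S)@_u = \sum_(t <- s) a t * (g t == u)%:R.
Proof. by rewrite raddf_sum; apply: eq_bigr => t _ /=; rewrite mcoeffZ mcoeffX. Qed.

Lemma coef_sumX_ne0 (T : eqType) (s : seq T) (a : T -> k) (g : T -> 'X_{1..n}) u :
  (\sum_(t <- s) a t *: 'X_[g t] : S)@_u != 0 ->
  exists t, [/\ t \in s, a t != 0 & g t = u].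
Proof.
rewrite coef_sumX => /sum_ne0 [t [ts]].
case: (eqVneq (g t) u) => [<-|ne]; first by rewrite mulr1 => H; exists t.
by rewrite mulr0 eqxx.
Qed.

Lemma Xmul m w : ('X_[m] * 'X_[w] : S) = 'X_[m + w].
Proof. by rewrite mpolyXD. Qed.

Lemma id_sum I (T : eqType) (s : seq T) (F : T -> S) :
  ideal I -> (forall t, t \in s -> I (F t)) -> I (\sum_(t <- s) F t).
Proof.
move=> [I0 ID IM]; elim: s => [|x s IH] H; first by rewrite big_nil.
rewrite big_cons; apply: ID; first by apply: H; rewrite inE eqxx.
by apply: IH => t ts; apply: H; rewrite inE ts orbT.
Qed.

Lemma id_scale I c f : ideal I -> I f -> I (c *: f).
Proof. by move=> [_ _ IM] H; rewrite -mul_mpolyC; apply: IM. Qed.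
Lemma id_opp I f : ideal I -> I f -> I (- f).
Proof. by move=> HI H; rewrite -scaleN1r; apply: id_scale. Qed.
Lemma id_add I f g : ideal I -> I f -> I g -> I (f + g).
Proof. by move=> [_ ID _]; apply: ID. Qed.
Lemma id_sub I f g : ideal I -> I f -> I g -> I (f - g).
Proof. by move=> HI Hf Hg; apply: id_add => //; apply: id_opp. Qed.
Lemma id_mul I s f : ideal I -> I f -> I (s * f).
Proof. by move=> [_ _ IM]; apply: IM. Qed.
Lemma id0 I : ideal I -> I 0.
Proof. by move=> [I0 _ _]. Qed.

Lemma MI_coef I f u : monomial_ideal I -> I f -> f@_u != 0 -> I 'X_[u].
Proof.
case=> HI Hrep Hf; case: (Hrep f Hf) => ps [Hps ->].
rewrite raddf_sum => /sum_ne0 [p [pps]].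
rewrite -mcoeff_msupp (perm_mem (msuppMX _ _)) => /mapP [m' _ ->].
rewrite addmC -Xmul; apply: id_mul => //; exact: Hps.
Qed.

Lemma MI_char I f : monomial_ideal I -> I f <-> (forall u, f@_u != 0 -> I 'X_[u]).
Proof.
move=> HI; split => [Hf u|H]; first exact: MI_coef.
rewrite (mpolyE f); apply: id_sum; first by case: HI.
move=> u; rewrite mcoeff_msupp => /H Hu; apply: id_scale => //; by case: HI.
Qed.

Lemma MI_up I m w : monomial_ideal I -> I 'X_[m] -> I 'X_[m + w].
Proof. by move=> [HI _] H; rewrite addmC -Xmul; apply: id_mul. Qed.

Lemma MI_diff I m m' : monomial_ideal I -> I ('X_[m] - 'X_[m']) -> ~ I 'X_[m] -> m = m'.
Proof.
move=> HI H Hm; apply/eqP; apply/negP => /negP ne; apply: Hm.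
apply: (MI_coef HI H); rewrite mcoeffB !mcoeffX eqxx.
case: (eqVneq m' m) => [E|ne']; first by rewrite E eqxx in ne.
by rewrite subr0 oner_eq0.
Qed.

Definition mideal (P : 'X_{1..n} -> Prop) : pset k n :=
  fun f => forall u, f@_u != 0 -> P u.

Lemma mideal_X (P : 'X_{1..n} -> Prop) u : mideal P 'X_[u] <-> P u.
Proof.
split => [H|H v]; first by apply: H; rewrite mcoeffX eqxx oner_eq0.
rewrite mcoeffX; case: (eqVneq u v) => [<-//|_]; by rewrite eqxx.
Qed.

Lemma mideal_MI (P : 'X_{1..n} -> Prop) :
  (forall u w, P u -> P (u + w)%MM) -> monomial_ideal (mideal P).
Proof.
move=> Pup; split; first split.
- by move=> u; rewrite mcoeff0 eqxx.
- move=> f g Hf Hg u; rewrite mcoeffD => H.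
  case: (eqVneq f@_u 0) => Hu; last exact: Hf.
  by apply: Hg; move: H; rewrite Hu add0r.
- move=> s f Hf u; rewrite -mcoeff_msupp => /msuppM_le /allpairsP [[m1 m2] /= [H1 H2 ->]].
  by rewrite addmC; apply: Pup; apply: Hf; rewrite -mcoeff_msupp.
move=> f Hf; exists [seq ((f@_u)%:MP, u) | u <- msupp f]; split.
  move=> p /mapP [u uf ->] /=; apply/mideal_X; apply: Hf; by rewrite -mcoeff_msupp.
rewrite big_map {1}(mpolyE f); apply: eq_bigr => u _; by rewrite mul_mpolyC.
Qed.

End MI.



Section Comb.
Variable n : nat.
Implicit Types (eps A X Y : zset n) (a b x y : zpt n).
Local Notation rt R := (clos_refl_trans (zpt n) R).

Lemma linked_sym eps a b : linked eps a b -> linked eps b a.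
Proof. by case=> Ha Hb [a' [b' [H1 H2 H3 H4]]]; split=> //; exists b', a'; rewrite -H3. Qed.

Lemma rt_sym eps a b : rt (linked eps) a b -> rt (linked eps) b a.
Proof.
elim=> [x y H|x|x y z _ IH1 _ IH2]; first by apply: rt_step; apply: linked_sym.
  exact: rt_refl.
exact: rt_trans IH2 IH1.
Qed.

Lemma linked_mono A eps a b : (forall x, A x -> eps x) -> linked A a b -> linked eps a b.
Proof.
move=> H [Ha Hb [a' [b' [H1 H2 H3 H4]]]]; split; try exact: H.
by exists a', b'; split=> //; apply: H.
Qed.

Lemma rt_mono A eps a b : (forall x, A x -> eps x) -> rt (linked A) a b -> rt (linked eps) a b.
Proof.
move=> H; elim=> [x y Hl|x|x y z _ IH1 _ IH2]; last exact: rt_trans IH1 IH2.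
  by apply: rt_step; apply: linked_mono Hl.
exact: rt_refl.
Qed.

Lemma rt_stay eps A a b : (forall x y, linked eps x y -> A x -> A y) ->
  rt (linked eps) a b -> A a -> A b.
Proof.
move=> H; elim=> [x y Hl|x|x y z _ IH1 _ IH2] //; first exact: H.
by move=> /IH1 /IH2.
Qed.

Lemma rt_restrict eps A a b : (forall x y, linked eps x y -> A x -> linked A x y) ->
  rt (linked eps) a b -> A a -> rt (linked A) a b.
Proof.
move=> H /clos_rt_rt1n_iff; elim=> [x|x y z Hl _ IH] Ha; first exact: rt_refl.
have Hxy := H _ _ Hl Ha; case: (Hxy) => _ Ay _.
apply: (@rt_trans _ _ x y z); [exact: rt_step | exact: IH].
Qed.

Lemma G_comp eps r (A : 'I_r -> zset n) :
  (forall x, eps x <-> exists i, A i x) ->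
  (forall i j x, A i x -> A j x -> i = j) ->
  (forall i, exists x, A i x) ->
  (forall i a b, A i a -> A i b -> rt (linked (A i)) a b) ->
  (forall i a a', A i a -> nonneg a' -> eps (a + a') -> A i (a + a')) ->
  (forall i, component eps (A i)) /\
  (forall C, component eps C -> exists i, zseteq C (A i)).
Proof.
move=> Hcov Hdisj Hne Hconn Hup.
have Aeps i x : A i x -> eps x by move=> H; apply/Hcov; exists i.
have stay i x y : linked eps x y -> A i x -> A i y.
  case=> Hx Hy [x' [y' [H1 H2 H3 H4]]] Ax.
  have Ax' := Hup _ _ _ Ax H1 H4.
  have [j Ay] := (proj1 (Hcov y) Hy).
  rewrite H3 in H4 Ax'.
  have Ay' := Hup _ _ _ Ay H2 H4.
  by rewrite (Hdisj _ _ _ Ax' Ay').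
have eqA i a : A i a -> zseteq (A i) (fun b => eps b /\ rt (linked eps) a b).
  move=> Aa b; split=> [Ab|[Eb Rab]]; last exact: rt_stay (stay i) Rab Aa.
  split; first exact: (Aeps i).
  apply: (rt_mono (A := A i)); last exact: Hconn. by move=> z; apply: Aeps.
split.
  move=> i; have [x Ax] := Hne i; exists x; split; [exact: (Aeps i) | exact: eqA].
move=> C [a [Ea HC]]; have [i Ai] := proj1 (Hcov a) Ea; exists i => x.
by rewrite HC (eqA _ _ Ai x).
Qed.

Lemma conn_transl X Y t : connected X -> (forall x, Y x <-> X (x + t)) -> connected Y.
Proof.
move=> HX HY a b Ya Yb.
have gen p q : rt (linked X) p q -> rt (linked Y) (p - t) (q - t).
  elim=> [x y Hl|x|x y z _ IH1 _ IH2]; last exact: rt_trans IH1 IH2; last exact: rt_refl.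
  apply: rt_step; case: Hl => Hx Hy [x' [y' [H1 H2 H3 H4]]].
  split; try by apply/HY; rewrite subrK.
  exists x', y'; split=> //; first by rewrite addrAC H3 addrAC.
  by apply/HY; rewrite addrAC subrK.
have := gen _ _ (HX _ _ (proj1 (HY a) Ya) (proj1 (HY b) Yb)).
by rewrite !addrK.
Qed.

Lemma conn_eq X Y : connected X -> zseteq X Y -> connected Y.
Proof. by move=> HX HXY; apply: (conn_transl (t := 0) HX) => x; rewrite addr0 HXY. Qed.

End Comb.



Section Lex.
Variable n : nat.
Implicit Types (A : zset n) (a b c x y : zpt n).

Lemma lex_refl a : lexle a a. Proof. by left. Qed.

Lemma lex_total a b : lexle a b \/ lexle b a.
Proof.
case: (classic (a = b)) => [->|ne]; first by left; left.
have [i0 Hi0] : exists i0, a i0 != b i0.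
  apply: NNPP => H; apply: ne; apply/ffunP => i.
  by case: (eqVneq (a i) (b i)) => // Hne; case: H; exists i.
case: (@arg_minnP _ i0 (fun i => a i != b i) (fun i : 'I_n => val i) Hi0) => i Hi Hmin.
have Heq (j : 'I_n) : (j < i)%N -> a j = b j.
  move=> ji; apply/eqP; apply: NNPP => /negP H.
  by have := Hmin _ H; rewrite leqNgt ji.
case: (ltgtP (a i) (b i)) => H.
- by left; right; exists i.
- by right; right; exists i; split=> // j /Heq.
- by rewrite H eqxx in Hi.
Qed.

Lemma lex_trans a b c : lexle a b -> lexle b c -> lexle a c.
Proof.
case=> [->//|[i [Hi Ei]]]; case=> [<-|[j [Hj Ej]]]; first by right; exists i.
right; case: (ltngtP i j) => ij.
- exists i; split; first by rewrite -(Ej _ ij).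
  by move=> l li; rewrite Ei // Ej // (ltn_trans li ij).
- exists j; split; first by rewrite (Ei _ ij).
  by move=> l lj; rewrite Ei ?Ej // (ltn_trans lj ij).
- have ij' : i = j by apply: val_inj.
  subst j; exists i; split; first exact: lt_trans Hi Hj.
  by move=> l li; rewrite Ei ?Ej.
Qed.

Lemma lex_min A (s : seq (zpt n)) : (forall x, A x -> x \in s) -> (exists x, A x) ->
  exists l, A l /\ forall v, A v -> lexle l v.
Proof.
elim: s A => [|x s IH] A Hs [y Ay]; first by have := Hs _ Ay.
case: (classic (exists z, A z /\ z <> x)) => [[z [Az zx]]|Hno].
  have [l [[Al lx] Hl]] : exists l, (A l /\ l <> x) /\ forall v, A v /\ v <> x -> lexle l v.
    apply: (IH (fun v => A v /\ v <> x)); last by exists z.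
    move=> v [Av vx]; have := Hs _ Av; rewrite inE => /orP [/eqP//|//].
  case: (classic (A x)) => Ax; last first.
    exists l; split=> // v Av; apply: Hl; split=> // vx; by subst v.
  case: (lex_total x l) => H.
    exists x; split=> // v Av; case: (classic (v = x)) => [->|vx]; first exact: lex_refl.
    exact: lex_trans H (Hl _ (conj Av vx)).
  exists l; split=> // v Av; case: (classic (v = x)) => [->//|vx]; exact: Hl.
have yx : y = x by apply: NNPP => H; apply: Hno; exists y.
subst y; exists x; split=> // v Av; case: (classic (v = x)) => [->|vx]; first exact: lex_refl.
by case: Hno; exists v.
Qed.

End Lex.

Section Reps.
Variable T : eqType.
Variable x0 : T.

Lemma reps (P : T -> Prop) (R : T -> T -> Prop) (s : seq T) :
  (forall x, R x x) -> (forall x y, R x y -> R y x) ->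
  (forall x, P x -> x \in s) ->
  exists rs : seq T, [/\ (forall y, y \in rs -> P y),
    (forall i j, (i < size rs)%N -> (j < size rs)%N -> R (nth x0 rs i) (nth x0 rs j) -> i = j) &
    (forall x, P x -> exists y, y \in rs /\ R y x)].
Proof.
move=> Rrefl Rsym Hs.
suff [rs [H1 H2 H3]] : exists rs : seq T, [/\ (forall y, y \in rs -> P y),
    (forall i j, (i < size rs)%N -> (j < size rs)%N -> R (nth x0 rs i) (nth x0 rs j) -> i = j) &
    (forall x, P x -> x \in s -> exists y, y \in rs /\ R y x)].
  by exists rs; split=> // x Px; apply: H3 => //; apply: Hs.
elim: s {Hs} => [|x s [rs [H1 H2 H3]]]; first by exists [::]; split.
case: (classic (P x /\ ~ exists y, y \in rs /\ R y x)) => [[Px Hno]|Hc].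
  exists (rcons rs x); split.
  - by move=> y; rewrite mem_rcons inE => /orP [/eqP->|/H1].
  - move=> i j; rewrite size_rcons !ltnS => Hi Hj; rewrite !nth_rcons.
    case: (ltnP i (size rs)) => ilt; case: (ltnP j (size rs)) => jlt.
    + exact: H2.
    + have ej : j = size rs by apply/eqP; rewrite eqn_leq Hj jlt.
      rewrite ej eqxx => HR; exfalso; apply: Hno.
      by exists (nth x0 rs i); split; [rewrite mem_nth | ].
    + have ei : i = size rs by apply/eqP; rewrite eqn_leq Hi ilt.
      rewrite ei eqxx => HR; exfalso; apply: Hno.
      by exists (nth x0 rs j); split; [rewrite mem_nth | apply: Rsym].
    + have ej : j = size rs by apply/eqP; rewrite eqn_leq Hj jlt.
      have ei : i = size rs by apply/eqP; rewrite eqn_leq Hi ilt.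
      by rewrite ei ej.
  - move=> y Py; rewrite inE => /orP [/eqP->|ys].
      by exists x; rewrite mem_rcons inE eqxx.
    have [z [zr Rz]] := H3 _ Py ys; by exists z; rewrite mem_rcons inE zr orbT.
exists rs; split=> // y Py; rewrite inE => /orP [/eqP yx|]; last exact: H3.
subst y; apply: NNPP => H; apply: Hc; split=> //.
Qed.

End Reps.



Section Fin.
Variables (k : fieldType) (n : nat).
Local Notation S := {mpoly k[n]}.
Implicit Types (I : pset k n) (f g : S) (u : 'X_{1..n}).

Lemma fin_bound I (B : seq S) (s : seq 'X_{1..n}) :
  monomial_ideal I ->
  (forall f, exists c : seq k, I (f - \sum_(i < size B) c`_i *: B`_i)) ->
  uniq s -> (forall u, u \in s -> ~ I 'X_[u]) -> (size s <= size B)%N.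
Proof.
move=> HMI HB us Hs; have HI : ideal I by case: HMI.
rewrite leqNgt; apply/negP => Hlt.
pose N := size B; pose m := size s.
pose cf (f : S) := epsilon (inhabits [::]) (fun c : seq k => I (f - \sum_(i < N) c`_i *: B`_i)).
have Hcf f : I (f - \sum_(i < N) (cf f)`_i *: B`_i) by exact: (epsilon_spec (inhabits [::]) _ (HB f)).
pose M : 'M[k]_(m, N) := \matrix_(j, i) (cf 'X_[nth 0%MM s j])`_i.
have nrf : ~~ row_free M.
  rewrite /row_free; apply/negP => /eqP Hr; have := rank_leq_col M.
  by rewrite Hr leqNgt Hlt.
have [j0 Hj0] : exists j0, row j0 (kermx M) != 0.
  apply: NNPP => H; move: nrf; rewrite -kermx_eq0 => /negP; apply.
  apply/eqP/row_matrixP => j; rewrite row0.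
  by case: (eqVneq (row j (kermx M)) 0) => // Hne; case: H; exists j.
pose a := row j0 (kermx M).
have aM : a *m M = 0 by rewrite /a -row_mul mulmx_ker row0.
have [j1 Hj1] : exists j1, a 0 j1 != 0.
  apply: NNPP => H; move: Hj0; rewrite -/a => /negP; apply; apply/eqP/rowP => j.
  rewrite [RHS]mxE; case: (eqVneq (a 0 j) 0) => // Hne; case: H; by exists j.
pose g : S := \sum_(j < m) a 0 j *: 'X_[nth 0%MM s j].
have Ig : I g.
  have -> : g = \sum_(j < m) a 0 j *: ('X_[nth 0%MM s j] -
      \sum_(i < N) (cf 'X_[nth 0%MM s j])`_i *: B`_i).
    under [RHS]eq_bigr => j _ do rewrite scalerBr scaler_sumr.
    rewrite sumrB; apply/eqP; rewrite -subr_eq0 opprB addrC subrK.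
    rewrite exchange_big /= big1 // => i _.
    under eq_bigr => j _ do rewrite scalerA.
    rewrite -scaler_suml.
    have := congr1 (fun A : 'rV_N => A 0 i) aM; rewrite !mxE => Hi.
    suff -> : \sum_(j < m) a 0 j * (cf 'X_[nth 0%MM s j])`_i = 0 by rewrite scale0r.
    by rewrite -[RHS]Hi; apply: eq_bigr => j _; rewrite /M !mxE.
  apply: id_sum => // j _; apply: id_scale => //.
have Hs1 : (j1 < m)%N by [].
apply: (Hs (nth 0%MM s j1)); first by rewrite mem_nth.
apply: (MI_coef HMI Ig).
rewrite /g raddf_sum (bigD1 j1) //= big1 ?addr0.
  by rewrite mcoeffZ mcoeffX eqxx mulr1.
move=> j Hj; rewrite mcoeffZ mcoeffX.
case: (eqVneq (nth 0%MM s j) (nth 0%MM s j1)) => [E|_]; last by rewrite mulr0.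
have := (uniqP 0%MM us) j j1; rewrite !inE => /(_ (ltn_ord j) (ltn_ord j1) E) E'.
by move: Hj; rewrite (val_inj E') eqxx.
Qed.

Lemma fin_young I : monomial_ideal I -> fin_codim I ->
  exists s : seq 'X_{1..n}, forall u, ~ I 'X_[u] -> u \in s.
Proof.
move=> HMI [B HB]; apply: NNPP => Hno.
suff: forall N, exists s : seq 'X_{1..n}, [/\ uniq s, size s = N & forall u, u \in s -> ~ I 'X_[u]].
  case/(_ (size B).+1) => s [us ss Hs]; have := fin_bound HMI HB us Hs.
  by rewrite ss ltnn.
elim=> [|N [s [us ss Hs]]]; first by exists [::].
have [u [Hu us']] : exists u, ~ I 'X_[u] /\ u \notin s.
  apply: NNPP => H; apply: Hno; exists s => u Hu; apply: NNPP => H'; apply: H.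
  by exists u; split=> //; apply/negP.
exists (u :: s); split; first by rewrite /= us' us.
  by rewrite /= ss.
by move=> v; rewrite inE => /orP [/eqP->//|/Hs].
Qed.

End Fin.



Lemma fchoice (T U : Type) (u0 : U) (P : T -> Prop) (R : T -> U -> Prop) :
  (forall t, P t -> exists u, R t u) -> exists f : T -> U, forall t, P t -> R t (f t).
Proof.
move=> H; exists (fun t => epsilon (inhabits u0) (R t)) => t Pt.
exact: (epsilon_spec (inhabits u0) _ (H t Pt)).
Qed.

Lemma sublist (T : eqType) (P : T -> Prop) (s : seq T) :
  (forall u, P u -> u \in s) -> exists l, uniq l /\ forall u, u \in l <-> P u.
Proof.
elim: s P => [|x s IH] P Hs.
  by exists [::]; split=> // u; split=> // /Hs.
have [l [ul Hl]] := IH (fun u => P u /\ u <> x) (fun u '(conj Pu ux) =>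
  match orP (Hs u Pu) with or_introl h => False_ind _ (ux (eqP h)) | or_intror h => h end).
case: (classic (P x)) => Px.
  exists (x :: l); split.
    rewrite /= ul andbT; apply/negP => /Hl [_]; by [].
  move=> u; rewrite inE; split => [/orP [/eqP->//|/Hl []//]|Pu].
  by case: (eqVneq u x) => [//|/eqP ne]; apply/orP; right; apply/Hl.
exists l; split=> // u; rewrite Hl; split=> [[]//|Pu]; split=> // ux; by subst u.
Qed.

Section MPoly2.
Variables (k : fieldType) (n : nat).
Local Notation S := {mpoly k[n]}.

Lemma lin_sum (F : S -> S) (T : eqType) (s : seq T) (G : T -> S) :
  (forall f g, F (f + g) = F f + F g) ->
  F (\sum_(t <- s) G t) = \sum_(t <- s) F (G t).
Proof.
move=> HD; have F0 : F 0 = 0.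
  have := HD 0 0; rewrite addr0 => H.
  by apply: (addrI (F 0)); rewrite addr0 -H.
elim: s => [|x s IH]; first by rewrite !big_nil.
by rewrite !big_cons HD IH.
Qed.

Lemma lin_ideal (F : S -> S) (J : pset k n) (Q : 'X_{1..n} -> Prop) f :
  (forall f g, F (f + g) = F f + F g) -> (forall c f, F (c *: f) = c *: F f) ->
  ideal J -> (forall u, Q u -> J (F 'X_[u])) -> (forall u, f@_u != 0 -> Q u) -> J (F f).
Proof.
move=> HD HZ HJ HQ Hf; rewrite (mpolyE f) lin_sum //; apply: id_sum => // u.
rewrite mcoeff_msupp => /Hf /HQ Ju; rewrite HZ; exact: id_scale.
Qed.

Lemma fin_codim_mideal (P : 'X_{1..n} -> Prop) (s : seq 'X_{1..n}) :
  (forall u, ~ P u -> u \in s) -> fin_codim (mideal (k:=k) P).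
Proof.
move=> Hs; pose s' := undup s.
exists [seq ('X_[u] : S) | u <- s'] => f.
exists [seq f@_u | u <- s'] => u Hu; apply: NNPP => Pu; move: Hu.
have us' : uniq s' by apply: undup_uniq.
have us : u \in s' by rewrite mem_undup; apply: Hs.
have -> : \sum_(i < size [seq ('X_[u] : S) | u <- s'])
    [seq f@_u | u <- s']`_i *: [seq ('X_[u] : S) | u <- s']`_i =
    \sum_(v <- s') f@_v *: 'X_[v].
  rewrite (big_nth 0%MM) big_mkord size_map; apply: eq_bigr => i _.
  by rewrite !(nth_map 0%MM).
rewrite mcoeffB coef_sumX (sum_pick us' us) ?eqxx ?mulr1 ?subrr ?eqxx //.
by move=> t _ /negbTE ->; rewrite mulr0.
Qed.

End MPoly2.



Section Side.
Variables (k : fieldType) (n : nat) (lam : zset n) (r : nat) (nu : 'I_r -> zset n) (b : 'I_r -> zpt n).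
Hypotheses (Hlam : young lam) (Hnu : forall i, conn_abs_skew (nu i))
  (Hd : cond_disj_in lam nu b) (Hc : cond_closed lam nu b).

Definition Eset (x : zpt n) := exists i, shift (nu i) (b i) x.
Definition PI (u : 'X_{1..n}) := ~ lam (mz u).
Definition PK (u : 'X_{1..n}) := ~ lam (mz u) \/ Eset (mz u).
Local Notation I := (mideal (k:=k) PI).
Local Notation K := (mideal (k:=k) PK).

Lemma lam_nonneg x : lam x -> nonneg x.
Proof. by case: Hlam => _ H _; apply: H. Qed.

Lemma lam_mz x : lam x -> exists m, mz m = x.
Proof. by move/lam_nonneg/nonneg_mz. Qed.

Lemma lam_sub m w : lam (mz (m + w)%MM) -> lam (mz m).
Proof.
case: Hlam => _ _ H; apply: H; first exact: mz_nonneg.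
by apply/zle_mz; apply: lem_addr.
Qed.

Lemma A_lam i x : shift (nu i) (b i) x -> lam x.
Proof. by case: Hd => _; apply. Qed.

Lemma E_lam x : Eset x -> lam x.
Proof. by case=> i; apply: A_lam. Qed.

Lemma A_uniq i j x : shift (nu i) (b i) x -> shift (nu j) (b j) x -> i = j.
Proof.
move=> Hi Hj; case: (eqVneq i j) => // ne; case: Hd => H _.
by case: (H _ _ ne x).
Qed.

Lemma A_up i x w : shift (nu i) (b i) x -> nonneg w -> lam (x + w) -> shift (nu i) (b i) (x + w).
Proof.
rewrite /shift => Hx Hw Hl; rewrite addrAC; apply: Hc => //.
by rewrite subrK.
Qed.

Lemma PI_up u w : PI u -> PI (u + w)%MM.
Proof. by move=> H /lam_sub. Qed.

Lemma PK_up u w : PK u -> PK (u + w)%MM.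
Proof.
case=> [H|[i Hi]]; first by left; apply: PI_up.
case: (classic (lam (mz (u + w)%MM))) => Hl; last by left.
by right; exists i; rewrite mzD; apply: A_up => //; [apply: mz_nonneg | rewrite -mzD].
Qed.

Lemma side_MI : [/\ monomial_ideal I, monomial_ideal K & psubset I K].
Proof.
split; [exact: mideal_MI PI_up | exact: mideal_MI PK_up |].
by move=> f Hf u /Hf; left.
Qed.

Lemma side_fin : fin_codim I.
Proof.
case: Hlam => [[sl Hsl] _ _].
apply: (@fin_codim_mideal _ _ _ [seq tomon x | x <- sl]) => u /NNPP Hu.
by apply/mapP; exists (mz u); [apply: Hsl | rewrite mzK].
Qed.

Lemma side_young : zseteq lam (young_of I).
Proof.
move=> x; split=> [Hx|[m [<- Hm]]].
  have [m Em] := lam_mz Hx; exists m; split=> //.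
  by move/mideal_X; rewrite /PI Em.
by apply: NNPP => H; apply: Hm; apply/mideal_X.
Qed.

Lemma side_skew x : skew_of K I x <-> Eset x.
Proof.
split=> [[m [<- /mideal_X HK /mideal_X HI]]|HE].
  by case: HK => // H; case: HI.
have [m Em] := lam_mz (E_lam HE); exists m; split=> //.
  by apply/mideal_X; right; rewrite Em.
by move/mideal_X; apply; rewrite Em; apply: E_lam.
Qed.

Lemma side_comp : components_are (skew_of K I) nu b.
Proof.
apply: G_comp.
- by move=> x; rewrite side_skew.
- by move=> i j x; apply: A_uniq.
- move=> i; case: (Hnu i) => mu0 [l [_ _ Hl _ Heq]].
  exists (b i); rewrite /shift subrr; apply/Heq; by rewrite /shift sub0r opprK.
- move=> i; case: (Hnu i) => mu0 [l [_ Hconn _ _ Heq]].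
  apply: (conn_transl (t := l - b i) Hconn) => x; rewrite /shift Heq /shift.
  by rewrite opprK addrA addrAC.
- move=> i a a' Ha Ha' /side_skew /E_lam Hl; exact: A_up.
Qed.

End Side.



Section Part2.
Variables (k : fieldType) (n : nat) (lam mu : zset n) (r : nat) (nu : 'I_r -> zset n) (b c : 'I_r -> zpt n).
Hypotheses (Hlam : young lam) (Hmu : young mu) (Hnu : forall i, conn_abs_skew (nu i))
  (Hdb : cond_disj_in lam nu b) (Hcb : cond_closed lam nu b)
  (Hdc : cond_disj_in mu nu c) (Hcc : cond_closed mu nu c).
Local Notation S := {mpoly k[n]}.
Local Notation E := (Eset nu b).
Local Notation F := (Eset nu c).

Lemma part2_main : exists (I K J L : pset k n) (phi : S -> S),
       [/\ [/\ monomial_ideal I, monomial_ideal K, monomial_ideal J, monomial_ideal L &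
               psubset I K /\ psubset J L],
           [/\ fin_codim I, fin_codim J, quot_iso K I L J phi & sends_monomials K I L J phi],
           zseteq lam (young_of I), zseteq mu (young_of J) &
           [/\ components_are (skew_of K I) nu b, components_are (skew_of L J) nu c &
               phi_matches J phi nu b c]].
Proof.
have [El [uniqEl HEl]] : exists El : seq 'X_{1..n}, uniq El /\ forall u, u \in El <-> E (mz u).
  case: Hlam => [[sl Hsl] _ _]; apply: (@sublist _ _ [seq tomon x | x <- sl]) => u /(E_lam Hdb) /Hsl Hu.
  by apply/mapP; exists (mz u); [| rewrite mzK].
have Hex : forall u, E (mz u) -> exists u', exists i, nu i (mz u - b i) /\ mz u' = mz u - b i + c i.
  move=> u [i Hi].
  have Hx : shift (nu i) (c i) (mz u - b i + c i) by rewrite /shift addrK.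
  exists (tomon (mz u - b i + c i)), i; split=> //.
  by rewrite tomonK //; apply: (lam_nonneg Hmu); apply: (A_lam Hdc Hx).
have [sig Hsig] := @fchoice _ _ 0%MM _ _ Hex.
have sigE u i : shift (nu i) (b i) (mz u) -> mz (sig u) = mz u - b i + c i.
  move=> Hi; have [j [Hj ->]] := Hsig u (ex_intro _ i Hi).
  by rewrite (A_uniq Hdb Hj Hi).
have sigF u : E (mz u) -> F (mz (sig u)).
  by case=> i Hi; exists i; rewrite /shift (sigE _ _ Hi) addrK.
have sigmu u : E (mz u) -> mu (mz (sig u)).
  by move/sigF/(E_lam Hdc).
have siginj u u' : E (mz u) -> E (mz u') -> sig u = sig u' -> u = u'.
  move=> [i Hi] [j Hj] Heq.
  have Ei := sigE _ _ Hi; have Ej := sigE _ _ Hj.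
  have ij : i = j.
    apply: (A_uniq Hdc (x := mz (sig u))); rewrite /shift; first by rewrite Ei addrK.
    by rewrite Heq Ej addrK.
  subst j; apply: mz_inj; move: Ei; rewrite Heq Ej => /addIr /addIr.
  by move=> ->.
have sigsurj u' : F (mz u') -> exists u, E (mz u) /\ sig u = u'.
  move=> [i Hi].
  have Ax : shift (nu i) (b i) (mz u' - c i + b i) by rewrite /shift addrK.
  have [u Eu] := lam_mz Hlam (A_lam Hdb Ax).
  exists u; split; first by exists i; rewrite Eu.
  by apply: mz_inj; rewrite (sigE u i) Eu ?addrK ?subrK.
have sigshift u w : E (mz u) -> lam (mz (u + w)%MM) ->
    E (mz (u + w)%MM) /\ sig (u + w)%MM = (sig u + w)%MM.
  move=> [i Hi] Hl.
  have Hiw : shift (nu i) (b i) (mz (u + w)%MM).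
    by rewrite mzD; apply: (A_up Hcb) => //; [apply: mz_nonneg | rewrite -mzD].
  split; first by exists i.
  apply: mz_inj; rewrite (sigE _ _ Hiw) !mzD (sigE _ _ Hi).
  by rewrite (addrAC (mz u - b i)) (addrAC (mz u) (- b i)).
have sigout u w : E (mz u) -> ~ lam (mz (u + w)%MM) -> ~ mu (mz (sig u + w)%MM).
  move=> [i Hi] Hl Hm; apply: Hl.
  have := Hcc (mz_nonneg w) Hi; rewrite -(sigE _ _ Hi) -mzD => /(_ Hm) H.
  apply: (A_lam Hdb (i := i)); rewrite /shift mzD; move: H.
  by rewrite addrAC.
pose phi (f : S) : S := \sum_(u <- El) f@_u *: 'X_[sig u].
have phiD f g : phi (f + g) = phi f + phi g.
  by rewrite /phi -big_split; apply: eq_bigr => u _; rewrite mcoeffD scalerDl.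
have phiZ a f : phi (a *: f) = a *: phi f.
  by rewrite /phi scaler_sumr; apply: eq_bigr => u _; rewrite mcoeffZ scalerA.
have phiXE m : E (mz m) -> phi 'X_[m] = 'X_[sig m].
  move=> Hm; rewrite /phi (sum_pick (t0 := m)) ?mcoeffX ?eqxx ?scale1r //; first exact/HEl.
  by move=> t _ ne; rewrite mcoeffX eq_sym (negbTE ne) scale0r.
have phiXN m : ~ E (mz m) -> phi 'X_[m] = 0.
  move=> Hm; rewrite /phi sum_zero // => t /HEl Ht; rewrite mcoeffX.
  by case: (eqVneq m t) => [Emt|_]; [subst t | rewrite scale0r].
have phicoef f u' : (phi f)@_u' = \sum_(u <- El) f@_u * (sig u == u')%:R.
  exact: coef_sumX.
have MI := side_MI k Hlam Hcb; have MJ := side_MI k Hmu Hcc.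
case: MI => MII MIK sIK; case: MJ => MIJ MIL sJL.
have idJ : ideal (mideal (k := k) (PI mu)) by case: MIJ.
exists (mideal (PI lam)), (mideal (PK lam nu b)), (mideal (PI mu)), (mideal (PK mu nu c)), phi.
split.
- by split.
- split.
  + exact: (@side_fin k n lam Hlam).
  + exact: (@side_fin k n mu Hmu).
  + split.
    * move=> f Hf u'; rewrite /phi => /coef_sumX_ne0 [u [uEl _ <-]].
      by right; apply: sigF; apply/HEl.
    * split.
        by move=> f g _ _; rewrite phiD subrr; apply: id0.
      move=> s f Hf.
      pose D s f := phi (s * f) - s * phi f.
      change (mideal (PI mu) (D s f)).
      apply: (@lin_ideal _ _ (D s) _ (PK lam nu b)) => //.
      - by move=> f1 f2; rewrite /D mulrDr !phiD mulrDr opprD addrACA.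
      - by move=> a f1; rewrite /D -scalerAr !phiZ -scalerAr scalerBr.
      move=> u Hu.
      apply: (@lin_ideal _ _ (fun s => D s 'X_[u]) _ (fun _ => True)) => //.
      - by move=> s1 s2; rewrite /D mulrDl phiD mulrDl opprD addrACA.
      - by move=> a s1; rewrite /D -scalerAl phiZ -scalerAl scalerBr.
      move=> w _; rewrite /D Xmul.
      case: Hu => [Hl|Hu].
        have h1 : ~ E (mz u) by move/(E_lam Hdb).
        have h2 : ~ E (mz (w + u)%MM) by move/(E_lam Hdb); rewrite addmC => /(lam_sub Hlam) /Hl.
        by rewrite (phiXN _ h1) (phiXN _ h2) mulr0 subrr; apply: id0.
      rewrite (phiXE u Hu) Xmul.
      case: (classic (lam (mz (u + w)%MM))) => Hl.
        have [HE Hs] := sigshift u w Hu Hl.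
        by rewrite addmC (phiXE _ HE) Hs addmC subrr; apply: id0.
      rewrite phiXN; last by rewrite addmC => /(E_lam Hdb).
      rewrite sub0r; apply: (id_opp idJ); apply/mideal_X; rewrite addmC.
      exact: sigout.
  + move=> f Hf u'; rewrite /phi => /coef_sumX_ne0 [u [uEl Hfu _]].
    by exfalso; apply: (Hf _ Hfu); apply: (E_lam Hdb); apply/HEl.
  + move=> f Hf HJ u Hfu; case: (Hf _ Hfu) => // HE; exfalso.
    have uEl : u \in El by apply/HEl.
    have : (phi f)@_(sig u) != 0.
      rewrite phicoef (sum_pick uniqEl uEl) ?eqxx ?mulr1 //.
      move=> t tEl ne; case: (eqVneq (sig t) (sig u)) => [Et|]; last by rewrite mulr0.
      by rewrite (siginj t u) ?eqxx in ne => //; apply/HEl.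
    by move/HJ; apply; apply: sigmu.
  + move=> g Hg.
    pose f := \sum_(u <- El) g@_(sig u) *: ('X_[u] : S).
    have fc u : u \in El -> f@_u = g@_(sig u).
      move=> uEl; rewrite /f coef_sumX (sum_pick uniqEl uEl) ?eqxx ?mulr1 //.
      by move=> t _ /negbTE ->; rewrite mulr0.
    exists f; split.
      move=> u; rewrite /f => /(@coef_sumX_ne0 _ _ _ _ _ (fun t => t)) [t [tEl _ <-]].
      by right; apply/HEl.
    move=> u'; rewrite mcoeffB phicoef (eq_big_seq (fun u => g@_(sig u) * (sig u == u')%:R)); last first.
      by move=> u uEl; rewrite fc.
    case: (classic (F (mz u'))) => HF.
      have [u0 [E0 <-]] := sigsurj _ HF.
      rewrite (sum_pick uniqEl (t0 := u0)) ?eqxx ?mulr1 ?subrr ?eqxx //; first by apply/HEl.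
      move=> t tEl ne; case: (eqVneq (sig t) (sig u0)) => [Et|]; last by rewrite mulr0.
      by rewrite (siginj t u0) ?eqxx in ne => //; apply/HEl.
    rewrite sum_zero ?sub0r ?oppr_eq0.
      by move=> /Hg [] // H; case: HF.
    move=> t tEl; case: (eqVneq (sig t) u') => [Et|]; last by rewrite mulr0.
    by case: HF; rewrite -Et; apply: sigF; apply/HEl.
  + move=> m /mideal_X HK /mideal_X HI.
    have Em : E (mz m) by case: HK => // H; case: HI.
    exists (sig m); split.
    * by apply/mideal_X; right; apply: sigF.
    * by move/mideal_X; apply; apply: sigmu.
    * by rewrite phiXE // subrr; apply: id0.
- exact: (@side_young k n lam Hlam).
- exact: (@side_young k n mu Hmu).
split.
- exact: (@side_comp k n lam r nu b Hlam Hnu Hdb Hcb).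
- exact: (@side_comp k n mu r nu c Hmu Hnu Hdc Hcc).
move=> i v m m' Hv Hm Hm'.
have Ai : shift (nu i) (b i) (mz m) by rewrite /shift Hm addrK.
have -> : m' = sig m by apply: mz_inj; rewrite (sigE _ _ Ai) Hm' Hm addrK.
by rewrite phiXE ?subrr; [apply: id0 | exists i].
Qed.

End Part2.



Section Part1.
Variables (k : fieldType) (n : nat) (I K J L : pset k n) (phi : {mpoly k[n]} -> {mpoly k[n]}).
Hypotheses (HI : monomial_ideal I) (HK : monomial_ideal K) (HJ : monomial_ideal J)
  (HL : monomial_ideal L) (sIK : psubset I K) (sJL : psubset J L)
  (finI : fin_codim I) (Hiso : quot_iso K I L J phi) (Hsend : sends_monomials K I L J phi).
Local Notation S := {mpoly k[n]}.
Local Notation X m := ('X_[m] : S).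

Let idI : ideal I. Proof. by case: HI. Qed.
Let idJ : ideal J. Proof. by case: HJ. Qed.
Let idK : ideal K. Proof. by case: HK. Qed.

Definition PE (m : 'X_{1..n}) := K (X m) /\ ~ I (X m).

Lemma P1_sigma : exists sig : 'X_{1..n} -> 'X_{1..n}, forall m, PE m ->
  [/\ L (X (sig m)), ~ J (X (sig m)) & J (phi (X m) - X (sig m))].
Proof.
apply: (@fchoice _ _ 0%MM PE (fun m m' => [/\ L (X m'), ~ J (X m') & J (phi (X m) - X m')])).
move=> m [Km Im].
by have [m' [H1 H2 H3]] := Hsend Km Im; exists m'.
Qed.

Lemma P1_add f g : K f -> K g -> J (phi (f + g) - (phi f + phi g)).
Proof. by case: Hiso => _ [H _] _ _ _; apply: H. Qed.
Lemma P1_mul s f : K f -> J (phi (s * f) - s * phi f).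
Proof. by case: Hiso => _ [_ H] _ _ _; apply: H. Qed.
Lemma P1_IJ f : I f -> J (phi f).
Proof. by case: Hiso => _ _ H _ _; apply: H. Qed.
Lemma P1_inj f : K f -> J (phi f) -> I f.
Proof. by case: Hiso => _ _ _ H _; apply: H. Qed.
Lemma P1_surj g : L g -> exists f, K f /\ J (phi f - g).
Proof. by case: Hiso => _ _ _ _ H; apply: H. Qed.

Lemma P1_phi0 : J (phi 0).
Proof.
have := P1_add (id0 idK) (id0 idK); rewrite addr0 => H.
have -> : phi 0 = - (phi 0 - (phi 0 + phi 0)) by ring.
exact: id_opp.
Qed.

Lemma P1_scale c f : K f -> J (phi (c *: f) - c *: phi f).
Proof. by move=> Kf; rewrite -!mul_mpolyC; apply: P1_mul. Qed.

Variable sig : 'X_{1..n} -> 'X_{1..n}.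
Hypothesis Hsig : forall m, PE m ->
  [/\ L (X (sig m)), ~ J (X (sig m)) & J (phi (X m) - X (sig m))].

Lemma P1_M m w : PE m -> J (phi (X (m + w)%MM) - X (sig m + w)%MM).
Proof.
move=> Pm; have [_ _ Hm] := Hsig Pm; case: (Pm) => Km _.
have := id_add idJ (P1_mul (X w) Km) (id_mul (X w) idJ Hm).
rewrite Xmul [(w + m)%MM]addmC => H.
have -> : phi (X (m + w)%MM) - X (sig m + w)%MM =
  phi (X (m + w)%MM) - X w * phi (X m) + X w * (phi (X m) - X (sig m)) + (X w * X (sig m) - X (sig m + w)%MM).
  by ring.
by rewrite Xmul [(w + sig m)%MM]addmC subrr addr0.
Qed.

Lemma P1_shift m w : PE m -> ~ I (X (m + w)%MM) -> PE (m + w)%MM /\ sig (m + w)%MM = (sig m + w)%MM.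
Proof.
move=> Pm Iw; have Pmw : PE (m + w)%MM by split=> //; apply: MI_up HK _; case: Pm.
split=> //; have [_ Jw Hw] := Hsig Pmw.
apply: (MI_diff HJ _ Jw).
have -> : X (sig (m + w)%MM) - X (sig m + w)%MM =
  (phi (X (m + w)%MM) - X (sig m + w)%MM) - (phi (X (m + w)%MM) - X (sig (m + w)%MM)) by ring.
by apply: id_sub => //; apply: P1_M.
Qed.

Lemma P1_out m w : PE m -> ~ J (X (sig m + w)%MM) -> ~ I (X (m + w)%MM).
Proof.
move=> Pm Jw Iw; apply: Jw.
have -> : X (sig m + w)%MM = phi (X (m + w)%MM) - (phi (X (m + w)%MM) - X (sig m + w)%MM) by ring.
by apply: id_sub => //; [apply: P1_IJ | apply: P1_M].
Qed.

Lemma P1_siginj m m' : PE m -> PE m' -> sig m = sig m' -> m = m'.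
Proof.
move=> Pm Pm' Heq; have [_ _ H1] := Hsig Pm; have [_ _ H2] := Hsig Pm'.
case: Pm => Km Im; case: Pm' => Km' _.
apply: (MI_diff HI _ Im); apply: P1_inj; first by apply: id_sub.
have Kn : K (- X m') by apply: id_opp.
have H3 := P1_add Km Kn.
have H4 := P1_scale (-1) Km'.
rewrite !scaleN1r in H4; rewrite Heq in H1.
have -> : phi (X m - X m') = (phi (X m + - X m') - (phi (X m) + phi (- X m')))
   + (phi (- X m') - (- phi (X m'))) + ((phi (X m) - X (sig m')) - (phi (X m') - X (sig m'))) by ring.
apply: (id_add idJ); first by apply: (id_add idJ).
by apply: (id_sub idJ).
Qed.

Lemma P1_claim (s : seq 'X_{1..n}) (a : 'X_{1..n} -> k) :
  (forall u, u \in s -> K (X u)) ->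
  exists g, J (phi (\sum_(u <- s) a u *: X u) - g) /\
    forall u', g@_u' != 0 -> exists u, [/\ u \in s, PE u & sig u = u'].
Proof.
elim: s => [|u s IH] Hs.
  exists 0; rewrite big_nil subr0; split; first exact: P1_phi0.
  by move=> u'; rewrite mcoeff0 eqxx.
have Ku : K (X u) by apply: Hs; rewrite inE eqxx.
have [g [Hg Hg']] := IH (fun v vs => Hs v (introT orP (or_intror vs))).
set h := \sum_(v <- s) a v *: X v in Hg *.
have Kh : K h by apply: id_sum => // v vs; apply: id_scale => //; apply: Hs; rewrite inE vs orbT.
have Kau : K (a u *: X u) by apply: id_scale.
rewrite big_cons -/h.
have T1 := P1_add Kau Kh; have T2 := P1_scale (a u) Ku.
case: (classic (I (X u))) => Iu.
  exists g; split.
    have -> : phi (a u *: X u + h) - g = (phi (a u *: X u + h) - (phi (a u *: X u) + phi h))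
      + (phi (a u *: X u) - a u *: phi (X u)) + a u *: phi (X u) + (phi h - g) by ring.
    apply: (id_add idJ) => //; apply: (id_add idJ); first by apply: (id_add idJ).
    by apply: (id_scale _ idJ); apply: P1_IJ.
  move=> u' /Hg' [v [vs Pv Ev]]; exists v; split=> //; by rewrite inE vs orbT.
have Pu : PE u by [].
have [_ _ Hu] := Hsig Pu.
exists (a u *: X (sig u) + g); split.
  have -> : phi (a u *: X u + h) - (a u *: X (sig u) + g) =
    (phi (a u *: X u + h) - (phi (a u *: X u) + phi h))
    + (phi (a u *: X u) - a u *: phi (X u)) + a u *: (phi (X u) - X (sig u)) + (phi h - g).
    by rewrite scalerBr; ring.
  apply: (id_add idJ) => //; apply: (id_add idJ); first by apply: (id_add idJ).
  exact: (id_scale _ idJ).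
move=> u'; rewrite mcoeffD mcoeffZ mcoeffX.
case: (eqVneq (sig u) u') => [<-|_] H; first by exists u; rewrite inE eqxx.
move: H; rewrite mulr0 add0r => /Hg' [v [vs Pv Ev]]; exists v; split=> //; by rewrite inE vs orbT.
Qed.

Lemma P1_sigsurj m'' : L (X m'') -> ~ J (X m'') -> exists m, PE m /\ sig m = m''.
Proof.
move=> Lm Jm; have [f [Kf Hf]] := P1_surj Lm.
have Ks : forall u, u \in msupp f -> K (X u).
  by move=> u; rewrite mcoeff_msupp => /(MI_coef HK Kf).
have [g [Hg Hg']] := P1_claim (fun u => f@_u) Ks.
rewrite -mpolyE in Hg.
apply: NNPP => Hno.
have g0 : g@_m'' = 0.
  case: (eqVneq g@_m'' 0) => // /Hg' [u [_ Pu Eu]]; by case: Hno; exists u.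
apply: Jm; apply: (MI_coef HJ (f := X m'' - g)).
  have -> : X m'' - g = (phi f - g) - (phi f - X m'') by ring.
  exact: (id_sub idJ).
by rewrite mcoeffB mcoeffX eqxx g0 subr0 oner_eq0.
Qed.

Local Notation E := (skew_of K I).
Local Notation lam := (young_of I).
Local Notation R := (clos_refl_trans (zpt n) (linked E)).

Lemma P1_E_mz x : E x -> exists m, mz m = x /\ PE m.
Proof. by case=> m [E1 E2 E3]; exists m. Qed.
Lemma P1_mz_E m : PE m -> E (mz m).
Proof. by case=> H1 H2; exists m. Qed.
Lemma P1_E_lam x : E x -> lam x.
Proof. by case=> m [<- _ Im]; exists m. Qed.

Lemma lam_young : young lam.
Proof.
have [sm Hsm] := fin_young HI finI.
split.
- by exists (map (@mz n) sm) => x [m [<- Im]]; apply: map_f; apply: Hsm.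
- by move=> w [m [<- _]]; apply: mz_nonneg.
move=> v w Hv Hvw [m [Em Im]]; have [m1 Em1] := nonneg_mz Hv.
exists m1; split=> // I1; apply: Im.
rewrite -Em -Em1 in Hvw; move/zle_mz: Hvw => le.
by rewrite -(submK le) addmC; exact: (MI_up _ HI I1).
Qed.

Lemma P1_E_up x w : E x -> nonneg w -> lam (x + w) -> E (x + w).
Proof.
case/P1_E_mz => m [<- [Km _]] Hw [m3 [E3 I3]]; have [w' Ew] := nonneg_mz Hw.
rewrite -Ew -mzD in E3 *; have E3' := mz_inj E3; subst m3.
exists (m + w')%MM; split=> //; exact: (MI_up _ HK Km).
Qed.

Definition tau (x : zpt n) := mz (sig (tomon x)) - x.

Lemma tau_linked x y : linked E x y -> tau x = tau y.
Proof.
case=> /P1_E_mz [m [<- Pm]] /P1_E_mz [m' [<- Pm']] [x' [y' [Hx' Hy' Heq HE]]].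
have [w Ew] := nonneg_mz Hx'; have [w' Ew'] := nonneg_mz Hy'; subst x' y'.
rewrite -!mzD in Heq HE; have Heq' := mz_inj Heq.
case/P1_E_mz: HE => m3 [E3 [_ I3]]; have E3' := mz_inj E3; subst m3.
have [_ S1] := P1_shift Pm I3; rewrite Heq' in I3; have [_ S2] := P1_shift Pm' I3.
rewrite /tau !mzK.
have : (sig m + w = sig m' + w')%MM by rewrite -S1 -S2 Heq'.
move/(congr1 (@mz n)); rewrite !mzD => H1; move: Heq; rewrite !mzD => H2.
apply/ffunP => i; have := congr1 (fun f : zpt n => f i) H1.
have := congr1 (fun f : zpt n => f i) H2; rewrite !ffunE; lia.
Qed.

Lemma tau_rt x y : R x y -> tau x = tau y.
Proof.
elim=> [x1 y1 H|//|x1 y1 z1 _ H1 _ H2]; first exact: tau_linked.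
by rewrite H1.
Qed.

Lemma part1_main : exists (r : nat) (nu : 'I_r -> zset n) (b c : 'I_r -> zpt n),
       [/\ (forall i, conn_abs_skew (nu i)),
           components_are (skew_of K I) nu b,
           components_are (skew_of L J) nu c,
           phi_matches J phi nu b c &
           [/\ cond_disj_in (young_of I) nu b, cond_closed (young_of I) nu b,
               cond_disj_in (young_of J) nu c & cond_closed (young_of J) nu c]].
Proof.
have [sm Hsm] := fin_young HI finI.
have Rrefl x : R x x by apply: rt_refl.
have Rsym x y : R x y -> R y x by apply: rt_sym.
have Rtr x y z : R x y -> R y z -> R x z by move=> H1 H2; apply: (@rt_trans _ _ x y z).
have Ecov x : E x -> x \in map (@mz n) sm.
  by case/P1_E_mz => m [<- [_ Im]]; apply: map_f; apply: Hsm.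
have [rs [Hrs1 Hrs2 Hrs3]] := reps (0 : zpt n) Rrefl Rsym Ecov.
pose r := size rs.
pose rep (i : 'I_r) := nth 0 rs i.
pose C (i : 'I_r) x := E x /\ R (rep i) x.
have repE i : E (rep i) by apply: Hrs1; apply: mem_nth; apply: ltn_ord.
have Crep i : C i (rep i) by split.
have Cstep i x y : linked E x y -> C i x -> C i y.
  move=> Hl [Ex Rx]; split; first by case: Hl.
  apply: (Rtr _ _ _ Rx); exact: rt_step.
have Cup i x w : C i x -> nonneg w -> E (x + w) -> C i (x + w).
  move=> Cx Hw Ew; apply: (Cstep i x) => //; split=> //; first by case: Cx.
  exists w, 0; split=> //; first by move=> j; rewrite ffunE.
  by rewrite addr0.
have Clinked i x y : linked E x y -> C i x -> linked (C i) x y.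
  move=> Hl Cx; have Cy := Cstep _ _ _ Hl Cx.
  case: Hl => _ _ [x' [y' [H1 H2 H3 H4]]]; split=> //.
  exists x', y'; split=> //; exact: Cup.
have Cconn i : connected (C i).
  move=> a0 b0 Ca Cb; apply: (rt_restrict (Clinked i)) => //.
  case: Ca => _ Ra; case: Cb => _ Rb; exact: Rtr _ _ _ (Rsym _ _ Ra) Rb.
have Cdisj i j x : C i x -> C j x -> i = j.
  case=> _ Ri [_ Rj]; apply: val_inj; apply: Hrs2; try exact: ltn_ord.
  exact: Rtr _ _ _ Ri (Rsym _ _ Rj).
have Ccov x : E x -> exists i, C i x.
  move=> Ex; have [y [yrs Ry]] := Hrs3 x Ex.
  have yi : (index y rs < r)%N by rewrite index_mem.
  exists (Ordinal yi); split=> //.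
  by rewrite /rep /= nth_index.
have [lf Hlf] : exists lf : 'I_r -> zpt n, forall i, True ->
    C i (lf i) /\ forall v, C i v -> lexle (lf i) v.
  apply: (@fchoice _ _ 0 (fun _ => True) (fun i l => C i l /\ forall v, C i v -> lexle l v)) => i _.
  apply: (lex_min (s := map (@mz n) sm)); last by exists (rep i).
  by move=> x [Ex _]; apply: Ecov.
have Cl i : C i (lf i) by case: (Hlf i Logic.I).
pose cf i := mz (sig (tomon (lf i))).
have Ctau i x : C i x -> mz (sig (tomon x)) = x - lf i + cf i.
  move=> Cx; have := tau_rt (Rtr _ _ _ (Rsym _ _ Cx.2) (Cl i).2).
  rewrite /tau /cf => H; rewrite -[LHS](subrK x) H.
  by rewrite addrC addrA addrAC.
have CPE i x : C i x -> exists m, mz m = x /\ PE m by case=> /P1_E_mz.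
have hAi i x : shift (shift (C i) (- lf i)) (lf i) x <-> C i x.
  by rewrite /shift opprK subrK.
have hA'i i y : shift (shift (C i) (- lf i)) (cf i) y <-> C i (y - cf i + lf i).
  by rewrite /shift opprK.
have KeyJ i x m w : C i x -> mz m = x -> ~ J (X (sig m + w)%MM) -> C i (x + mz w).
  move=> Cx Em Jw; have [m0 [Em0 Pm]] := CPE _ _ Cx.
  have mm0 : m = m0 by apply: mz_inj; rewrite Em Em0.
  subst m0; apply: Cup => //; first exact: mz_nonneg.
  rewrite -Em -mzD; apply: P1_mz_E; split; last exact: P1_out.
  by case: Pm => Km _; apply: MI_up.
have Fiff y : skew_of L J y <-> exists i, C i (y - cf i + lf i).
  split.
    case=> m'' [<- Lm Jm]; have [m [Pm <-]] := P1_sigsurj Lm Jm.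
    have [i Ci] := Ccov _ (P1_mz_E Pm); exists i.
    by rewrite -{1}(mzK m) (Ctau _ _ Ci) addrK subrK.
  case=> i Ci; have [m [Em Pm]] := CPE _ _ Ci; have [H1 H2 _] := Hsig Pm.
  exists (sig m); split=> //.
  by rewrite -[m]mzK Em (Ctau _ _ Ci) addrK subrK.
have F_mu y : skew_of L J y -> young_of J y.
  by case=> m'' [<- _ Jm]; exists m''.
have Cdisj' i j y : C i (y - cf i + lf i) -> C j (y - cf j + lf j) -> i = j.
  move=> Ci Cj.
  have [mi [Emi Pi]] := CPE _ _ Ci; have [mj [Emj Pj]] := CPE _ _ Cj.
  have Ei := Ctau _ _ Ci; have Ej := Ctau _ _ Cj.
  rewrite -Emi mzK Emi addrK subrK in Ei; rewrite -Emj mzK Emj addrK subrK in Ej.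
  have := P1_siginj Pi Pj (mz_inj (etrans Ei (esym Ej))) => Eij.
  by apply: (Cdisj _ _ (mz mi)); [rewrite Emi | rewrite Eij Emj].
exists r, (fun i => shift (C i) (- lf i)), lf, cf; split.
- move=> i; exists (C i), (lf i); split.
  + exists (young_of I), (fun x => young_of I x /\ ~ C i x); split.
    * exact: lam_young.
    * case: lam_young => [[sl Hsl] Hnn Hdn]; split.
      - by exists sl => x [Hx _]; apply: Hsl.
      - by move=> w [Hw _]; apply: Hnn.
      - move=> v w Hv Hvw [Hw Cw]; split; first exact: Hdn Hv Hvw Hw.
        move=> Cv; apply: Cw; have Hwv := zle_nonneg Hvw.
        have e : v + (w - v) = w by rewrite addrC subrK.
        have Ev : E v by case: Cv.
        rewrite -e; apply: Cup Cv Hwv _; apply: P1_E_up => //; [exact: zle_nonneg Hvw | by rewrite e].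
    * move=> x; split=> [Cx|[Hx Hn]]; last by apply: NNPP => Cn; apply: Hn.
      by split; [apply: P1_E_lam; case: Cx | case].
  + exact: Cconn.
  + exact: Cl.
  + by case: (Hlf i Logic.I).
  + by [].
- apply: G_comp.
  + move=> x; split=> [/Ccov [i Ci]|[i /hAi [Ex _]]] //; by exists i; apply/hAi.
  + by move=> i j x /hAi Ci /hAi Cj; apply: Cdisj Ci Cj.
  + by move=> i; exists (rep i); apply/hAi.
  + move=> i; apply: (conn_eq (Cconn i)) => x; by rewrite hAi.
  + by move=> i a a' /hAi Ca Ha' Ea; apply/hAi; apply: Cup.
- apply: G_comp.
  + by move=> y; rewrite Fiff; split=> [[i Ci]|[i /hA'i Ci]]; exists i => //; apply/hA'i.
  + by move=> i j y /hA'i Ci /hA'i Cj; apply: Cdisj' Ci Cj.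
  + by move=> i; exists (cf i); apply/hA'i; rewrite subrr add0r.
  + move=> i; apply: (conn_transl (t := lf i - cf i) (Cconn i)) => y.
    by rewrite hA'i addrA addrAC.
  + move=> i y w /hA'i Cy Hw Fyw; apply/hA'i.
    have [m [Em Pm]] := CPE _ _ Cy; have [w' Ew] := nonneg_mz Hw.
    case: Fyw => m3 [E3 _ J3].
    have E3' : m3 = (sig m + w')%MM.
      apply: mz_inj; rewrite E3 mzD Ew -[m]mzK Em (Ctau _ _ Cy).
      by rewrite addrK subrK.
    subst m3; have := KeyJ _ _ _ _ Cy Em J3; rewrite Ew.
    by rewrite addrAC [y + w - cf i]addrAC.
- move=> i v m m' Hv Hm Hm'.
  have Cm : C i (mz m) by rewrite Hm; move: Hv; rewrite /shift opprK.
  have [m0 [Em0 Pm]] := CPE _ _ Cm; have mm0 := mz_inj Em0; subst m0.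
  have -> : m' = sig m.
    by apply: mz_inj; rewrite Hm' -[m]mzK (Ctau _ _ Cm) Hm addrK.
  by case: (Hsig Pm).
split.
- split.
    by move=> i j ne x [/hAi Ci /hAi Cj]; move/eqP: ne; apply; apply: Cdisj Ci Cj.
  by move=> i x /hAi [Ex _]; apply: P1_E_lam.
- move=> i w v Hw; rewrite /shift !opprK => Cv Hl.
  rewrite addrAC; apply: Cup => //; apply: P1_E_up => //; by case: Cv.
- split.
    by move=> i j ne y [/hA'i Ci /hA'i Cj]; move/eqP: ne; apply; apply: Cdisj' Ci Cj.
  by move=> i y /hA'i Ci; apply: F_mu; apply/Fiff; exists i.
- move=> i w v Hw; rewrite /shift !opprK => Cv [m3 [E3 J3]].
  have [m [Em Pm]] := CPE _ _ Cv; have [w' Ew] := nonneg_mz Hw.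
  have E3' : m3 = (sig m + w')%MM.
    apply: mz_inj; rewrite E3 mzD Ew -[m]mzK Em (Ctau _ _ Cv).
    by rewrite addrK.
  subst m3; have := KeyJ _ _ _ _ Cv Em J3; rewrite Ew.
  by rewrite addrAC.
Qed.

End Part1.

Theorem corollary2p1 (k : fieldType) (n : nat) :
  (forall (I K J L : pset k n) (phi : {mpoly k[n]} -> {mpoly k[n]}),
     monomial_ideal I -> monomial_ideal K -> monomial_ideal J -> monomial_ideal L ->
     psubset I K -> psubset J L -> fin_codim I -> fin_codim J ->
     quot_iso K I L J phi -> sends_monomials K I L J phi ->
     exists (r : nat) (nu : 'I_r -> zset n) (b c : 'I_r -> zpt n),
       [/\ (forall i, conn_abs_skew (nu i)),
           components_are (skew_of K I) nu b,
           components_are (skew_of L J) nu c,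
           phi_matches J phi nu b c &
           [/\ cond_disj_in (young_of I) nu b, cond_closed (young_of I) nu b,
               cond_disj_in (young_of J) nu c & cond_closed (young_of J) nu c]])
  /\
  (forall (lam mu : zset n) (r : nat) (nu : 'I_r -> zset n) (b c : 'I_r -> zpt n),
     young lam -> young mu -> (forall i, conn_abs_skew (nu i)) ->
     cond_disj_in lam nu b -> cond_closed lam nu b ->
     cond_disj_in mu nu c -> cond_closed mu nu c ->
     exists (I K J L : pset k n) (phi : {mpoly k[n]} -> {mpoly k[n]}),
       [/\ [/\ monomial_ideal I, monomial_ideal K, monomial_ideal J, monomial_ideal L &
               psubset I K /\ psubset J L],
           [/\ fin_codim I, fin_codim J, quot_iso K I L J phi & sends_monomials K I L J phi],
           zseteq lam (young_of I), zseteq mu (young_of J) &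
           [/\ components_are (skew_of K I) nu b, components_are (skew_of L J) nu c &
               phi_matches J phi nu b c]]).
Proof.
split.
- move=> I K J L phi HI HK HJ HL sIK sJL finI finJ Hiso Hsend.
  have [sig Hsig] := P1_sigma Hsend.
  exact: (part1_main HI HK HJ finI Hiso Hsig).
- move=> lam mu r nu b c Hlam Hmu Hnu Hdb Hcb Hdc Hcc.
  exact: (part2_main k Hlam Hmu Hnu Hdb Hcb Hdc Hcc).
Qed.
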